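(* Let $\mathcal H$ be a real Hilbert space, $v\in\mathcal H$ with $\|v\|=1$, $P$ the orthogonal projection onto $\{v\}^\perp$, and order $\mathcal H$ by the Lorentz cone $\mathcal L_v=\{x\in\mathcal H:\langle v|x\rangle\ge\|Px\|\}$. Let $x\in\mathcal H$ and let $Q$ be the orthogonal projection onto $\mathrm{span}\{x,v\}$. If $y\in\mathcal H$ satisfies $-x\le y$ and $x\le y$, then $-x\le Qy$ and $x\le Qy$.
   Context: $a\le b$ means $b-a\in\mathcal L_v$. *)

(* Defs.v *)
From HB Require Import structures.
From mathcomp Require Import all_boot all_order all_algebra.
From mathcomp Require Import all_classical all_reals all_analysis.
Import Order.TTheory GRing.Theory Num.Theory.
Import numFieldNormedType.Exports.
Set Implicit Arguments.
Unset Strict Implicit.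
Local Open Scope classical_set_scope.
Local Open Scope ring_scope.

(* A real Hilbert space: a complete real normed space V whose norm is
   induced by an inner product ip (symmetric, bilinear, ip x x = |x|^2). *)
Definition is_inner_product (R : realType) (V : completeNormedModType R)
  (ip : V -> V -> R) : Prop :=
  [/\ (forall x y, ip x y = ip y x),
      (forall (a : R) x y z, ip (a *: x + y) z = a * ip x z + ip y z)
    & (forall x, ip x x = `|x| ^+ 2)].

Definition orth_compl1 (R : realType) (V : completeNormedModType R)
  (ip : V -> V -> R) (v : V) : set V := [set z | ip v z = 0].

Definition span2 (R : realType) (V : completeNormedModType R) (x v : V) : set V :=
  [set z | exists a b : R, z = a *: x + b *: v].

Definition is_orth_proj (R : realType) (V : completeNormedModType R)
  (ip : V -> V -> R) (S : set V) (P : V -> V) : Prop :=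
  forall z, S (P z) /\ (forall s, S s -> ip (z - P z) s = 0).

Definition lorentz_cone (R : realType) (V : completeNormedModType R)
  (ip : V -> V -> R) (v : V) (P : V -> V) : set V :=
  [set z | `|P z| <= ip v z].

Definition lorentz_le (R : realType) (V : completeNormedModType R)
  (ip : V -> V -> R) (v : V) (P : V -> V) (a b : V) : Prop :=
  lorentz_cone ip v P (b - a).

(* Main.v *)
Require Import Defs.
From HB Require Import structures.
From mathcomp Require Import all_boot all_order all_algebra.
From mathcomp Require Import all_classical all_reals all_analysis.
From mathcomp Require Import ring lra.
Import Order.TTheory GRing.Theory Num.Theory.
Import numFieldNormedType.Exports.
Local Open Scope classical_set_scope.
Local Open Scope ring_scope.

Section Aux.
Variables (R : realType) (V : completeNormedModType R) (ip : V -> V -> R).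
Hypothesis hip : is_inner_product ip.

Lemma ipDl x y z : ip (x + y) z = ip x z + ip y z.
Proof. case: hip => _ h _. by have := h 1 x y z; rewrite scale1r mul1r. Qed.
Lemma ip0l z : ip 0 z = 0.
Proof. case: hip => _ h _. have := h 1 0 0 z. rewrite scaler0 addr0 mul1r => e. lra. Qed.
Lemma ipZl (a : R) x z : ip (a *: x) z = a * ip x z.
Proof. case: hip => _ h _. by have := h a x 0 z; rewrite addr0 ip0l addr0. Qed.
Lemma ipNl x z : ip (- x) z = - ip x z.
Proof. by rewrite -scaleN1r ipZl mulN1r. Qed.
Lemma ipBl x y z : ip (x - y) z = ip x z - ip y z.
Proof. by rewrite ipDl ipNl. Qed.
Lemma ipC x y : ip x y = ip y x.
Proof. by case: hip. Qed.
Lemma ipBr x y z : ip z (x - y) = ip z x - ip z y.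
Proof. by rewrite ipC ipBl (ipC x) (ipC y). Qed.
Lemma ipZr (a : R) x z : ip z (a *: x) = a * ip z x.
Proof. by rewrite ipC ipZl ipC. Qed.
Lemma ipn x : ip x x = `|x| ^+ 2.
Proof. by case: hip. Qed.

Lemma pyth a b : ip a b = 0 -> `|a + b| ^+ 2 = `|a| ^+ 2 + `|b| ^+ 2.
Proof.
move=> h; rewrite -!ipn ipDl (ipC a) (ipC b) !ipDl h (ipC b a) h; ring.
Qed.

Variables (v : V) (P : V -> V).
Hypothesis hv : `|v| = 1.
Hypothesis hP : is_orth_proj ip (orth_compl1 ip v) P.

Lemma normP u : `|P u| ^+ 2 = `|u| ^+ 2 - ip v u ^+ 2.
Proof.
have [Pin Port] := hP u.
have hvv : ip v v = 1 by rewrite ipn hv expr1n.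
set p := P u in Pin Port *.
have rp : ip (u - p) p = 0 by apply: Port.
have vr : ip v (u - p) = ip v u by rewrite ipBr Pin subr0.
have s0 : orth_compl1 ip v (u - p - ip v (u - p) *: v).
  by rewrite /orth_compl1 /= ipBr ipZr hvv mulr1 subrr.
have := Port _ s0; rewrite ipBr ipZr ipn (ipC (u - p) v) vr => e.
have : `|u| ^+ 2 = `|p| ^+ 2 + `|u - p| ^+ 2.
  by have := pyth _ _ rp; rewrite subrK addrC.
move=> ->; rewrite !expr2 in e *; lra.
Qed.

Lemma cone_proj (S : set V) z w : S v -> S w ->
  (forall s, S s -> ip (z - w) s = 0) ->
  lorentz_cone ip v P z -> lorentz_cone ip v P w.
Proof.
move=> Sv Sw orth; rewrite /lorentz_cone /= => hz.
have e1 : ip v w = ip v z.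
  have := orth _ Sv; rewrite ipBl (ipC z) (ipC w). lra.
have e2 : `|z| ^+ 2 = `|w| ^+ 2 + `|z - w| ^+ 2.
  have hw := orth _ Sw.
  by have := pyth _ _ hw; rewrite subrK addrC.
have nz := normP z; have nw := normP w.
have g1 : 0 <= `|P z| by [].
have g2 : 0 <= `|P w| by [].
have g3 : 0 <= `|z - w| ^+ 2 by rewrite exprn_ge0.
have a0 : 0 <= ip v z by apply: le_trans hz.
have hz2 : `|P z| ^+ 2 <= ip v z ^+ 2.
  by rewrite (ler_pXn2r (n:=2)) // nnegrE.
rewrite e1 -(ler_pXn2r (n:=2)) ?nnegrE //.
rewrite nw e1; rewrite nz e2 in hz2; lra.
Qed.
End Aux.

Theorem lemma7p6 (R : realType) (V : completeNormedModType R)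
  (ip : V -> V -> R) (hip : is_inner_product ip)
  (v : V) (hv : `|v| = 1)
  (P : V -> V) (hP : is_orth_proj ip (orth_compl1 ip v) P)
  (x : V) (Q : V -> V) (hQ : is_orth_proj ip (span2 x v) Q)
  (y : V) (h1 : lorentz_le ip v P (- x) y) (h2 : lorentz_le ip v P x y) :
  lorentz_le ip v P (- x) (Q y) /\ lorentz_le ip v P x (Q y).
Proof.
have [SQ oQ] := hQ y.
have Sv : span2 x v v by exists 0, 1; rewrite scale0r add0r scale1r.
have Sx : forall a : R, span2 x v (a *: x).
  by move=> a; exists a, 0; rewrite scale0r addr0.
have Sw : forall c : R, span2 x v (Q y + c *: x).
  by move=> c; case: SQ => a [b ->]; exists (a + c), b; rewrite scalerDl addrAC.
rewrite /lorentz_le; split.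
- apply: (@cone_proj _ _ ip hip v P hv hP (span2 x v) (y - - x)) => //.
    by have := Sw 1; rewrite scale1r opprK.
  move=> s Ss; have -> : y - - x - (Q y - - x) = y - Q y by rewrite opprB addrA subrK.
  exact: oQ.
- apply: (@cone_proj _ _ ip hip v P hv hP (span2 x v) (y - x)) => //.
    by rewrite -scaleN1r; apply: Sw.
  move=> s Ss; have -> : y - x - (Q y - x) = y - Q y by rewrite opprB addrA subrK.
  exact: oQ.
Qed.
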